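(* Let $k,n,h$ be positive integers with $k\leqslant n$ and $h\geqslant 3$, and let $C=(C_1,\ldots,C_h)$ be a tuple of pairwise distinct elements of $[n]^k_<$ which is a shelling order. If $|C_{h-1}\cap C_h|<k-1$, then $(C_1,\ldots,C_{h-2},C_h,C_{h-1})$ is a shelling order.
   Context: $[n]:=\{1,\ldots,n\}$; $[n]^k_<$ denotes the set of $k$-element subsets of $[n]$. A tuple $C=(C_1,\ldots,C_h)$ of pairwise distinct elements of $[n]^k_<$ is a shelling order if for all $i<j$ in $[h]$ there exists $z<j$ with $|C_z\cap C_j|=k-1$ and $C_i\cap C_j\subseteq C_z\cap C_j$. *)

(* Defs.v *)
From mathcomp Require Import all_boot.
Set Implicit Arguments. Unset Strict Implicit. Unset Printing Implicit Defensive.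

(* [n] is modelled by 'I_n (elements 0..n-1 instead of 1..n).
   A tuple (C_1,...,C_h) is modelled by C : 'I_h -> {set 'I_n},
   with C_(i+1) = C i (0-based indexing). *)

Definition ksubset_tuple (n k h : nat) (C : 'I_h -> {set 'I_n}) : Prop :=
  injective C /\ forall i, #|C i| = k.

Definition shelling_order (n k h : nat) (C : 'I_h -> {set 'I_n}) : Prop :=
  forall i j : 'I_h, i < j ->
    exists z : 'I_h, z < j /\ #|C z :&: C j| = k.-1 /\
                     (C i :&: C j \subset C z :&: C j).

Definition swap_entries (n h : nat) (C : 'I_h -> {set 'I_n}) (a b : 'I_h)
  : 'I_h -> {set 'I_n} :=
  fun i => if i == a then C b else if i == b then C a else C i.

(* Main.v *)
Require Import Defs.
From mathcomp Require Import all_boot.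
From mathcomp Require Import zify.

Theorem proposition5p3 (k n h : nat) (C : 'I_h -> {set 'I_n}) :
  0 < k -> 0 < n -> k <= n -> 3 <= h ->
  ksubset_tuple k C -> shelling_order k C ->
  forall (a b : 'I_h), val a = h - 2 -> val b = h - 1 ->
  #|C a :&: C b| < k.-1 ->
  shelling_order k (swap_entries C a b).
Proof.
move=> k0 n0 kn h3 [inj card] sh a b ha0 hb0 hab i j lij.
have ha : nat_of_ord a = h - 2 := ha0.
have hb : nat_of_ord b = h - 1 := hb0.
have ab : a < b by rewrite ha hb; lia.
have Dlt : forall z : 'I_h, z < a -> swap_entries C a b z = C z.
  move=> z lz; rewrite /swap_entries.
  have -> : (z == a) = false by apply/negbTE; rewrite -val_eqE /= neq_ltn lz.
  have -> : (z == b) = false.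
    by apply/negbTE; rewrite -val_eqE /= neq_ltn (ltn_trans lz ab).
  done.
have Da : swap_entries C a b a = C b by rewrite /swap_entries eqxx.
have Db : swap_entries C a b b = C a.
  by rewrite /swap_entries ifN ?eqxx // -val_eqE /= neq_ltn ab orbT.
have zlt : forall z : 'I_h, z < b -> #|C z :&: C b| = k.-1 -> z < a.
  move=> z zb cz; case: (ltngtP z a) => // za.
  - lia.
  - by move: hab; rewrite (_ : a = z) ?cz ?ltnn //; apply: val_inj.
case: (ltngtP j a) => ja.
- have ia := ltn_trans lij ja.
  have [z [zj [cz sz]]] := sh i j lij.
  exists z; rewrite !Dlt //; exact: ltn_trans zj ja.
- have jb : j = b by apply: val_inj; change (nat_of_ord j = nat_of_ord b); have := ltn_ord j; lia.
  subst j; rewrite Db.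
  case: (ltngtP i a) => ia.
  + have [z [zj [cz sz]]] := sh i a ia.
    exists z; rewrite !Dlt //; split => //; exact: ltn_trans zj ab.
  + lia.
  + have -> : i = a by apply: val_inj.
    rewrite Da.
    have [z [zb [cz sz]]] := sh a b ab.
    have za := zlt z zb cz.
    have [z' [z'a [cz' sz']]] := sh z a za.
    exists z'; rewrite Dlt //; split; first exact: ltn_trans z'a ab.
    split => //.
    apply: subset_trans sz'.
    apply/subsetP => x; rewrite !inE => /andP[xb xa].
    have := subsetP sz x; rewrite !inE xa xb /= => /(_ isT) /andP[-> _].
    by [].
- have -> : j = a by apply: val_inj.
  have ia : i < a by rewrite -ja.
  rewrite Da Dlt //.
  have [z [zb [cz sz]]] := sh i b (ltn_trans ia ab).
  have za := zlt z zb cz.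
  by exists z; rewrite Dlt.
Qed.
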